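(* Let $G$ be a group and let $\varphi,\psi\in\mathrm{Aut}(G)$ with $\varphi\psi=\psi\varphi$. On $G$ define $a*b=\varphi(ab^{-1})b$ and $a\circ b=\psi(ab^{-1})b$. Then for all integers $k,l$, the groupoid $(G,*^k\circ^l)$, with operation $a\,( *^k\circ^l)\,b=(a*^k b)\circ^l b$, is a quandle.
   Context: A quandle is a set with binary operation $*$ satisfying $x*x=x$, unique right division, and $(x*y)*z=(x*z)*(y*z)$; both operations above are quandle operations (generalised Alexander quandles). Powers: $a*^0b=a$; for $n\ge1$, $a*^nb=(a*^{n-1}b)*b$ and $a*^{-n}b$ is obtained by applying $n$ times the right inverse operation $\bar*$ (defined by $a=c*b\iff c=a\,\bar*\,b$); similarly for $\circ$. *)

(* Defs.v *)
From Stdlib Require Import ZArith ClassicalEpsilon.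

Record group := Group {
  carrier :> Type;
  gmul : carrier -> carrier -> carrier;
  ginv : carrier -> carrier;
  gone : carrier;
  gmulA : forall x y z, gmul x (gmul y z) = gmul (gmul x y) z;
  gmul1l : forall x, gmul gone x = x;
  gmul1r : forall x, gmul x gone = x;
  gmulVl : forall x, gmul (ginv x) x = gone;
  gmulVr : forall x, gmul x (ginv x) = gone
}.

Definition is_aut {G : group} (f : G -> G) : Prop :=
  (forall x y : G, f (gmul G x y) = gmul G (f x) (f y)) /\
  (forall x y : G, f x = f y -> x = y) /\
  (forall y : G, exists x : G, f x = y).

Definition is_quandle {T : Type} (op : T -> T -> T) : Prop :=
  (forall x : T, op x x = x) /\
  (forall a b : T, exists! c : T, op c b = a) /\
  (forall x y z : T, op (op x y) z = op (op x z) (op y z)).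

Definition rdiv {T : Type} (i : inhabited T) (op : T -> T -> T) (a b : T) : T :=
  epsilon i (fun c => op c b = a).

Definition qpow {T : Type} (i : inhabited T) (op : T -> T -> T) (n : Z) (a b : T) : T :=
  if (0 <=? n)%Z then Nat.iter (Z.to_nat n) (fun x => op x b) a
  else Nat.iter (Z.to_nat (- n)) (fun x => rdiv i op x b) a.

Definition group_inhabited (G : group) : inhabited G := inhabits (gone G).

Definition alex_op {G : group} (f : G -> G) (a b : G) : G :=
  gmul G (f (gmul G a (ginv G b))) b.

(* Main.v *)
Require Import Defs.
From Stdlib Require Import ZArith ClassicalEpsilon FunctionalExtensionality.


Lemma mulVK (G : group) (x y : G) : gmul G (gmul G x (ginv G y)) y = x.
Proof. rewrite <- gmulA, gmulVl, gmul1r; reflexivity. Qed.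

Lemma mulKV (G : group) (x y : G) : gmul G (gmul G x y) (ginv G y) = x.
Proof. rewrite <- gmulA, gmulVr, gmul1r; reflexivity. Qed.

Lemma mulIr (G : group) (x y z : G) : gmul G x z = gmul G y z -> x = y.
Proof. intro H. rewrite <- (mulKV G x z), <- (mulKV G y z), H; reflexivity. Qed.

Lemma mulIl (G : group) (x y z : G) : gmul G z x = gmul G z y -> x = y.
Proof. intro H. rewrite <- (gmul1l G x), <- (gmul1l G y), <- (gmulVl G z),
  <- !gmulA, H; reflexivity. Qed.

Lemma inv_uniq (G : group) (x y : G) : gmul G x y = gone G -> y = ginv G x.
Proof. intro H. apply (mulIl G _ _ x). rewrite H, gmulVr; reflexivity. Qed.

Lemma invK (G : group) (x : G) : ginv G (ginv G x) = x.
Proof. symmetry. apply inv_uniq. apply gmulVl. Qed.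

Lemma invM (G : group) (x y : G) : ginv G (gmul G x y) = gmul G (ginv G y) (ginv G x).
Proof. symmetry. apply inv_uniq. rewrite gmulA, mulKV, gmulVr. reflexivity. Qed.

Lemma aut1 (G : group) (f : G -> G) : is_aut f -> f (gone G) = gone G.
Proof. intros [Hm _]. apply (mulIl G _ _ (f (gone G))).
  rewrite <- Hm, !gmul1r. reflexivity. Qed.

Lemma autV (G : group) (f : G -> G) x : is_aut f -> f (ginv G x) = ginv G (f x).
Proof. intro Ha. apply inv_uniq. destruct Ha as [Hm Hr] eqn:E.
  rewrite <- Hm, gmulVr. apply aut1; auto. Qed.

Lemma alex_inj (G : group) (f : G -> G) (c c' b : G) : is_aut f ->
  alex_op f c b = alex_op f c' b -> c = c'.
Proof. intros [_ [Hi _]] H. unfold alex_op in H.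
  apply mulIr in H. apply Hi in H. apply mulIr in H. exact H. Qed.

Lemma alex_comp (G : group) (f g : G -> G) a b :
  alex_op f (alex_op g a b) b = alex_op (fun x => f (g x)) a b.
Proof. unfold alex_op. rewrite mulKV. reflexivity. Qed.

Lemma alex_id (G : group) a b : alex_op (fun x : G => x) a b = a.
Proof. unfold alex_op. apply mulVK. Qed.

Lemma aut_id (G : group) : is_aut (fun x : G => x).
Proof. split; [|split]; eauto. Qed.

Lemma aut_comp (G : group) (f g : G -> G) : is_aut f -> is_aut g ->
  is_aut (fun x => f (g x)).
Proof. intros [Hm [Hi Hs]] [Hm' [Hi' Hs']]. split; [|split].
  - intros; rewrite Hm', Hm; reflexivity.
  - intros x y H; auto.
  - intro y. destruct (Hs y) as [z Hz]. destruct (Hs' z) as [w Hw].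
    exists w. rewrite Hw; auto. Qed.

Definition finv (G : group) (f : G -> G) (y : G) : G :=
  epsilon (inhabits (gone G)) (fun x => f x = y).

Lemma finvK (G : group) (f : G -> G) y : is_aut f -> f (finv G f y) = y.
Proof. intros [_ [_ Hs]]. unfold finv. apply epsilon_spec. apply Hs. Qed.

Lemma aut_finv (G : group) (f : G -> G) : is_aut f -> is_aut (finv G f).
Proof. intro Ha. pose proof Ha as [Hm [Hi Hs]]. split; [|split].
  - intros x y. apply Hi. rewrite Hm, !finvK; auto.
  - intros x y H. rewrite <- (finvK G f x), <- (finvK G f y), H; auto.
  - intro y. exists (f y). apply Hi. rewrite finvK; auto. Qed.

Lemma iter_alex (G : group) (f : G -> G) (F : G -> G -> G) :
  (forall x b, F x b = alex_op f x b) ->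
  forall n a b, Nat.iter n (fun x => F x b) a = alex_op (Nat.iter n f) a b.
Proof. intros HF n. induction n as [|n IH]; intros a b; simpl.
  - symmetry. apply alex_id.
  - rewrite HF, IH, alex_comp. reflexivity. Qed.

Lemma aut_iter (G : group) (f : G -> G) n : is_aut f -> is_aut (Nat.iter n f).
Proof. intro Ha. induction n; simpl.
  - apply aut_id.
  - apply (aut_comp G f (Nat.iter n f)); auto. Qed.

Lemma qpow_alex (G : group) (f : G -> G) (n : Z) : is_aut f ->
  exists g, is_aut g /\ forall a b,
    qpow (group_inhabited G) (alex_op f) n a b = alex_op g a b.
Proof. intro Ha. unfold qpow. destruct (0 <=? n)%Z.
  - exists (Nat.iter (Z.to_nat n) f). split. apply aut_iter; auto.
    intros a b. apply iter_alex. reflexivity.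
  - exists (Nat.iter (Z.to_nat (- n)) (finv G f)). split.
    apply aut_iter, aut_finv; auto.
    intros a b. apply iter_alex. intros x c.
    apply (alex_inj G f _ _ c Ha). unfold rdiv.
    rewrite (epsilon_spec (group_inhabited G) (fun y => alex_op f y c = x)).
    + rewrite alex_comp. unfold alex_op.
      rewrite finvK by auto. symmetry. apply mulVK.
    + exists (alex_op (finv G f) x c). rewrite alex_comp. unfold alex_op.
      rewrite finvK by auto. apply mulVK.
Qed.

Lemma alex_quandle (G : group) (h : G -> G) : is_aut h -> is_quandle (alex_op h).
Proof. intro Ha. pose proof Ha as [Hm [Hi Hs]]. split; [|split].
  - intro x. unfold alex_op. rewrite gmulVr, aut1 by auto. apply gmul1l.
  - intros a b. destruct (Hs (gmul G a (ginv G b))) as [x Hx].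
    exists (gmul G x b). split.
    + unfold alex_op. rewrite mulKV, Hx. apply mulVK.
    + intros c Hc. apply (alex_inj G h _ _ b Ha). rewrite Hc.
      unfold alex_op. rewrite mulKV, Hx. rewrite mulVK. reflexivity.
  - intros x y z. unfold alex_op.
    assert (K : gmul G (gmul G (h (gmul G x (ginv G z))) z)
                  (ginv G (gmul G (h (gmul G y (ginv G z))) z))
                = h (gmul G x (ginv G y))).
    { rewrite invM, gmulA, mulKV, <- autV, <- Hm by auto. f_equal.
      rewrite invM, invK, gmulA, mulVK. reflexivity. }
    rewrite K. rewrite !Hm. rewrite !gmulA. reflexivity.
Qed.

Theorem proposition4p19 (G : group) (phi psi : G -> G)
  (hphi : is_aut phi) (hpsi : is_aut psi)
  (hcomm : forall x : G, phi (psi x) = psi (phi x)) (k l : Z) :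
  is_quandle (fun a b : G =>
    qpow (group_inhabited G) (alex_op psi) l
      (qpow (group_inhabited G) (alex_op phi) k a b) b).
Proof.
  destruct (qpow_alex G phi k hphi) as [g1 [Hg1 E1]].
  destruct (qpow_alex G psi l hpsi) as [g2 [Hg2 E2]].
  assert (E : (fun a b : G =>
    qpow (group_inhabited G) (alex_op psi) l
      (qpow (group_inhabited G) (alex_op phi) k a b) b)
    = alex_op (fun x => g2 (g1 x))).
  { apply functional_extensionality_dep; intro a.
    apply functional_extensionality_dep; intro b.
    rewrite E1, E2. apply alex_comp. }
  rewrite E. apply alex_quandle, aut_comp; auto.
Qed.
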